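(* Let $\eta,\theta\in\mathbb{R}$, $\sigma,\tau\ge0$ with $\sigma\tau\ne1$, and fix $t>0$. Suppose $(c_k)_{k\ge1}$ is a real sequence with $c_1=1$ satisfying, for every $k\ge2$, $$c_{k+1}=\frac{\theta-\eta t}{1+\sigma t}c_k+\frac{t+\tau}{1+\sigma t}\Big(\sum_{j=1}^{k-1}c_jc_{k-j}+\eta\sum_{j=0}^{k-1}c_{j+1}c_{k-j}+\sigma\sum_{j=0}^{k-1}c_{j+2}c_{k-j}\Big).$$ Then for every $p>1$ there exists a constant $M$ such that $|c_k|\le \dfrac{M^{k-2}}{k^p}$ for all $k\ge3$. *)

(* Defs.v *)
From Stdlib Require Import Reals List.
Open Scope R_scope.

(* rsum a b f = f a + f (a+1) + ... + f b  (empty, i.e. 0, if b < a). *)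
Definition rsum (a b : nat) (f : nat -> R) : R :=
  fold_right Rplus 0 (map f (seq a (S b - a))).

(* The recurrence of the paper, for a given k >= 2 (sequence indexed from 1;
   the value c 0 is unused). *)
Definition rec_holds (eta theta sigma tau t : R) (c : nat -> R) (k : nat) : Prop :=
  c (S k) =
    (theta - eta * t) / (1 + sigma * t) * c k
    + (t + tau) / (1 + sigma * t) *
      ( rsum 1 (k - 1) (fun j => c j * c (k - j)%nat)
        + eta * rsum 0 (k - 1) (fun j => c (S j) * c (k - j)%nat)
        + sigma * rsum 0 (k - 1) (fun j => c (S (S j)) * c (k - j)%nat)).

(* Main.v *)
Require Import Defs.
From Stdlib Require Import Reals Lra Lia List.
Open Scope R_scope.

Fixpoint sm (f : nat -> R) (n : nat) : R :=
  match n with O => 0 | S n' => sm f n' + f n' end.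

Lemma sm_first f n : sm f (S n) = f O + sm (fun i => f (S i)) n.
Proof. induction n; simpl in *; [lra|]. rewrite IHn; lra. Qed.

Lemma sm_ext f g n : (forall i, (i < n)%nat -> f i = g i) -> sm f n = sm g n.
Proof. induction n; intros H; simpl; auto. rewrite IHn by (intros; apply H; lia). rewrite H by lia; auto. Qed.

Lemma sm_le f g n : (forall i, (i < n)%nat -> f i <= g i) -> sm f n <= sm g n.
Proof. induction n; intros H; simpl; [lra|]. assert (H1:= H n ltac:(lia)). assert (sm f n <= sm g n) by (apply IHn; intros; apply H; lia). lra. Qed.

Lemma sm_abs f n : Rabs (sm f n) <= sm (fun i => Rabs (f i)) n.
Proof. induction n; simpl. rewrite Rabs_R0; lra. eapply Rle_trans. apply Rabs_triang. lra. Qed.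

Lemma sm_scal c f n : sm (fun i => c * f i) n = c * sm f n.
Proof. induction n; simpl; [ring|]. rewrite IHn; ring. Qed.

Lemma sm_plus f g n : sm (fun i => f i + g i) n = sm f n + sm g n.
Proof. induction n; simpl; [ring|]. rewrite IHn; ring. Qed.

Lemma fold_sm f n a : fold_right Rplus 0 (map f (seq a n)) = sm (fun i => f (a + i)%nat) n.
Proof. revert a; induction n; intro a; [reflexivity|]. cbn [seq map fold_right].
  rewrite sm_first. rewrite IHn. replace (a+0)%nat with a by lia. f_equal.
  apply sm_ext; intros; f_equal; lia. Qed.

Lemma rsum_sm a b f : rsum a b f = sm (fun i => f (a + i)%nat) (S b - a).
Proof. unfold rsum. apply fold_sm. Qed.

Lemma key_ineq x : 1 <= x -> 1 / x ^ 2 <= 1 / (x - 1/2) - 1 / (x + 1/2).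
Proof. intros Hx. assert (x^2 - 1/4 <> 0) by (simpl; nra).
  replace (1 / (x - 1/2) - 1 / (x + 1/2)) with (1 / (x^2 - 1/4)) by (field; lra).
  unfold Rdiv; rewrite !Rmult_1_l. apply Rinv_le_contravar; simpl; [assert (1 <= x*x) by nra; lra | lra]. Qed.

Lemma tel1 n : sm (fun i => 1 / (INR i + 2) ^ 2) n <= 2/3 - 1 / (INR n + 3/2).
Proof. induction n; cbn [sm]. simpl INR. lra.
  rewrite S_INR. pose proof (pos_INR n).
  assert (Hk := key_ineq (INR n + 2) ltac:(lra)).
  replace (INR n + 2 - 1/2) with (INR n + 3/2) in Hk by lra.
  replace (INR n + 1 + 3/2) with (INR n + 2 + 1/2) by lra. lra. Qed.

Lemma tel2 n b : INR n <= b -> sm (fun i => 1 / (b - INR i + 1) ^ 2) n <= 1 / (b - INR n + 3/2) - 1 / (b + 3/2).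
Proof. induction n; intros Hb; cbn [sm]. simpl INR. replace (b - 0 + 3/2) with (b+3/2) by lra. lra.
  rewrite S_INR in *. pose proof (pos_INR n).
  assert (Hk := key_ineq (b - INR n + 1) ltac:(lra)).
  assert (IH := IHn ltac:(lra)).
  replace (b - INR n + 1 + 1/2) with (b - INR n + 3/2) in Hk by lra.
  replace (b - (INR n + 1) + 3/2) with (b - INR n + 1 - 1/2) by lra. lra. Qed.

Lemma prod_ineq x y : 0 < x -> 0 < y ->
  1 / (x^2 * y^2) <= 2 / (x+y)^2 * (1/x^2 + 1/y^2).
Proof. intros. assert (2 / (x+y)^2 * (1/x^2 + 1/y^2) - 1 / (x^2 * y^2) = (x-y)^2 / ((x+y)^2 * x^2 * y^2)) by (field; lra).
  assert (0 <= (x-y)^2 / ((x+y)^2 * x^2 * y^2)). apply Rle_mult_inv_pos. apply pow2_ge_0.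
  apply Rmult_lt_0_compat; [apply Rmult_lt_0_compat|]; apply pow_lt; lra. lra. Qed.

Lemma hsum n : sm (fun i => 1 / ((INR i + 2)^2 * (INR n - INR i + 1)^2)) n <= 4 / (INR n + 3)^2.
Proof.
  eapply Rle_trans.
  apply (sm_le _ (fun i => 2 / (INR n + 3)^2 * (1 / (INR i + 2)^2 + 1/(INR n - INR i + 1)^2))).
  { intros i Hi. pose proof (pos_INR i). assert (INR i < INR n) by (apply lt_INR; lia).
    replace (INR n + 3) with ((INR i + 2) + (INR n - INR i + 1)) by ring.
    apply prod_ineq; lra. }
  rewrite sm_scal, sm_plus.
  pose proof (tel1 n). pose proof (tel2 n (INR n) ltac:(lra)). pose proof (pos_INR n).
  assert (0 < 1 / (INR n + 3/2)) by (apply Rdiv_lt_0_compat; lra).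
  assert (0 < 1 / (INR n + 3/2)) by (apply Rdiv_lt_0_compat; lra).
  replace (INR n - INR n + 3/2) with (3/2) in H0 by ring.
  assert (0 < 2 / (INR n + 3)^2) by (apply Rdiv_lt_0_compat; [lra| apply pow_lt; lra]).
  assert (4 / (INR n + 3)^2 = 2 / (INR n + 3)^2 * 2) by (field; lra). rewrite H5.
  apply Rmult_le_compat_l; lra. Qed.

Lemma mid_bound (c : nat -> R) K M n : 0 <= K -> 1 <= M ->
 (forall j, (2 <= j <= n+1)%nat -> Rabs (c j) <= K * M^(j-2) / INR j ^ 2) ->
 Rabs (sm (fun i => c (2+i)%nat * c (n+3-(2+i))%nat) n) <= 4 * K^2 * M^(n-1) / INR (n+3) ^ 2.
Proof.
  intros HK HM H.
  eapply Rle_trans; [apply sm_abs|].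
  eapply Rle_trans. apply (sm_le _ (fun i => K^2*M^(n-1) * (1/((INR i + 2)^2 * (INR n - INR i + 1)^2)))).
  { intros i Hi. rewrite Rabs_mult.
    pose proof (H (2+i)%nat ltac:(lia)) as H1.
    pose proof (H (n+3-(2+i))%nat ltac:(lia)) as H2.
    replace (2+i-2)%nat with i in H1 by lia.
    replace (n+3-(2+i)-2)%nat with (n-1-i)%nat in H2 by lia.
    assert (E1: INR (2+i) = INR i + 2) by (rewrite plus_INR; simpl; ring).
    assert (E2: INR (n+3-(2+i)) = INR n - INR i + 1) by (rewrite minus_INR by lia; rewrite !plus_INR; simpl; ring).
    rewrite E1 in H1. rewrite E2 in H2.
    pose proof (pos_INR i). assert (INR i < INR n) by (apply lt_INR; lia).
    replace (K ^ 2 * M ^ (n - 1) * (1 / ((INR i + 2) ^ 2 * (INR n - INR i + 1) ^ 2)))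
      with ((K * M^i / (INR i + 2)^2) * (K * M^(n-1-i) / (INR n - INR i + 1)^2)).
    2:{ replace (n-1)%nat with (i + (n-1-i))%nat at 2 by lia. rewrite pow_add.
        field. split; lra. }
    apply Rmult_le_compat; auto; apply Rabs_pos. }
  rewrite sm_scal. pose proof (hsum n).
  rewrite plus_INR. replace (INR 3) with 3 by (simpl; ring).
  assert (0 <= K^2 * M^(n-1)) by (apply Rmult_le_pos; [apply pow2_ge_0 | apply pow_le; lra]).
  replace (4 * K ^ 2 * M ^ (n - 1) / (INR n + 3) ^ 2) with (K^2 * M^(n-1) * (4 / (INR n + 3)^2)) by (field; pose proof (pos_INR n); lra).
  apply Rmult_le_compat_l; auto.
Qed.

Lemma step_arith a b eta sigma D K Y z x2 x3 m0 m1 m2 : 0 <= sigma -> 0 <= K -> 0 <= Y -> D <> 0 ->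
 Rabs x2 <= 4*K*Y -> Rabs x3 <= 4*K*Y -> Rabs m0 <= 16*K^2*Y -> Rabs m1 <= 4*K^2*Y -> Rabs m2 <= 4*K^2*Y ->
 D * z = a*x3 + b*(2*x2 + m0 + eta*(2*x3+m1) + sigma*m2) ->
 Rabs z <= K*Y*(1 + (4*Rabs a + Rabs b*(8 + 16*K + Rabs eta*(8+4*K) + 4*sigma*K))/Rabs D).
Proof.
  intros Hs HK HY HD h2 h3 h0 h1 h4 Hz.
  assert (I1: Rabs (2*x3+m1) <= 8*K*Y + 4*K^2*Y).
  { eapply Rle_trans. apply Rabs_triang. rewrite Rabs_mult, Rabs_right by lra. lra. }
  assert (I2: Rabs (eta*(2*x3+m1)) <= Rabs eta * (8*K*Y + 4*K^2*Y)).
  { rewrite Rabs_mult. apply Rmult_le_compat_l; auto. apply Rabs_pos. }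
  assert (I3: Rabs (sigma*m2) <= sigma * (4*K^2*Y)).
  { rewrite Rabs_mult, (Rabs_right sigma) by lra. apply Rmult_le_compat_l; auto. }
  assert (I4: Rabs (2*x2) <= 8*K*Y) by (rewrite Rabs_mult, Rabs_right by lra; lra).
  assert (I5: Rabs (2*x2 + m0 + eta*(2*x3+m1) + sigma*m2) <= 8*K*Y + 16*K^2*Y + Rabs eta * (8*K*Y + 4*K^2*Y) + sigma * (4*K^2*Y)).
  { pose proof (Rabs_triang (2*x2 + m0 + eta*(2*x3+m1)) (sigma*m2)).
    pose proof (Rabs_triang (2*x2 + m0) (eta*(2*x3+m1))).
    pose proof (Rabs_triang (2*x2) m0). lra. }
  assert (I6: Rabs (b*(2*x2 + m0 + eta*(2*x3+m1) + sigma*m2)) <= Rabs b * (8*K*Y + 16*K^2*Y + Rabs eta * (8*K*Y + 4*K^2*Y) + sigma * (4*K^2*Y))).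
  { rewrite Rabs_mult. apply Rmult_le_compat_l; auto. apply Rabs_pos. }
  assert (I7: Rabs (a*x3) <= Rabs a * (4*K*Y)).
  { rewrite Rabs_mult. apply Rmult_le_compat_l; auto. apply Rabs_pos. }
  assert (I8: Rabs D * Rabs z <= K*Y*(4*Rabs a + Rabs b*(8 + 16*K + Rabs eta*(8+4*K) + 4*sigma*K))).
  { rewrite <- Rabs_mult, Hz. eapply Rle_trans. apply Rabs_triang.
    replace (K*Y*(4*Rabs a + Rabs b*(8 + 16*K + Rabs eta*(8+4*K) + 4*sigma*K))) with
      (Rabs a * (4*K*Y) + Rabs b * (8*K*Y + 16*K^2*Y + Rabs eta * (8*K*Y + 4*K^2*Y) + sigma * (4*K^2*Y))) by ring.
    lra. }
  assert (HDp: 0 < Rabs D) by (apply Rabs_pos_lt; auto).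
  assert (0 <= K*Y) by (apply Rmult_le_pos; auto).
  replace (K*Y*(1 + (4*Rabs a + Rabs b*(8 + 16*K + Rabs eta*(8+4*K) + 4*sigma*K))/Rabs D))
    with (K*Y + (K*Y*(4*Rabs a + Rabs b*(8 + 16*K + Rabs eta*(8+4*K) + 4*sigma*K)))/Rabs D) by (field; lra).
  assert (Rabs z <= (K*Y*(4*Rabs a + Rabs b*(8 + 16*K + Rabs eta*(8+4*K) + 4*sigma*K)))/Rabs D).
  { apply (Rmult_le_reg_l (Rabs D)); auto. replace (Rabs D * (K * Y * (4 * Rabs a + Rabs b * (8 + 16 * K + Rabs eta * (8 + 4 * K) + 4 * sigma * K)) / Rabs D)) with (K * Y * (4 * Rabs a + Rabs b * (8 + 16 * K + Rabs eta * (8 + 4 * K) + 4 * sigma * K))) by (field; lra). lra. }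
  lra.
Qed.

Definition Mid (c : nat -> R) m := sm (fun i => c (2+i)%nat * c (m+3-(2+i))%nat) m.

Lemma sm_S f n : sm f (S n) = sm f n + f n.
Proof. reflexivity. Qed.

Lemma sm_fl f n : sm f (S (S n)) = f O + sm (fun i => f (S i)) n + f (S n).
Proof. rewrite sm_first, sm_S. ring. Qed.

Lemma E1 (c : nat -> R) n : c 1%nat = 1 ->
  rsum 1 (n+3-1) (fun j => c j * c (n+3-j)%nat) = 2*c (n+2)%nat + Mid c n.
Proof.
  intros c1. rewrite rsum_sm. replace (S (n+3-1) - 1)%nat with (S (S n)) by lia.
  rewrite sm_fl. unfold Mid.
  rewrite (sm_ext _ (fun i => c (2+i)%nat * c (n+3-(2+i))%nat) n) by (intros; f_equal; f_equal; lia).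
  replace (n+3-(1+0))%nat with (n+2)%nat by lia. replace (1+0)%nat with 1%nat by lia.
  replace (1 + S n)%nat with (n+2)%nat by lia. replace (n+3-(n+2))%nat with 1%nat by lia.
  rewrite c1. ring.
Qed.

Lemma E2 (c : nat -> R) n : c 1%nat = 1 ->
  rsum 0 (n+3-1) (fun j => c (S j) * c (n+3-j)%nat) = 2*c (n+3)%nat + Mid c (n+1).
Proof.
  intros c1. rewrite rsum_sm. replace (S (n+3-1) - 0)%nat with (S (S (S n))) by lia.
  rewrite sm_fl. unfold Mid. replace (n+1)%nat with (S n) by lia.
  rewrite (sm_ext _ (fun i => c (2+i)%nat * c (S n+3-(2+i))%nat) (S n)) by (intros; f_equal; f_equal; lia).
  replace (n+3-(0+0))%nat with (n+3)%nat by lia. replace (S (0+0)) with 1%nat by lia.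
  replace (S (0 + S (S n)))%nat with (n+3)%nat by lia. replace (n+3-(0 + S (S n)))%nat with 1%nat by lia.
  rewrite c1. ring.
Qed.

Lemma E3 (c : nat -> R) n : c 1%nat = 1 ->
  rsum 0 (n+3-1) (fun j => c (S (S j)) * c (n+3-j)%nat) = Mid c (n+2) + c (n+4)%nat.
Proof.
  intros c1. rewrite rsum_sm. replace (S (n+3-1) - 0)%nat with (S (S (S n))) by lia.
  rewrite sm_S. unfold Mid. replace (n+2)%nat with (S (S n)) by lia.
  rewrite (sm_ext _ (fun i => c (2+i)%nat * c (S (S n)+3-(2+i))%nat) (S (S n))) by (intros; f_equal; f_equal; lia).
  replace (S (S (0 + S (S n))))%nat with (n+4)%nat by lia. replace (n+3-(0 + S (S n)))%nat with 1%nat by lia.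
  rewrite c1. ring.
Qed.

Lemma decomp eta theta sigma tau t (c : nat -> R) n : c 1%nat = 1 -> 0 <= sigma -> 0 < t ->
  rec_holds eta theta sigma tau t c (n+3) ->
  (1 - sigma*tau)/(1+sigma*t) * c (n+4)%nat = (theta - eta*t)/(1+sigma*t) * c (n+3)%nat
    + (t+tau)/(1+sigma*t) * (2*c (n+2)%nat + Mid c n + eta*(2*c (n+3)%nat + Mid c (n+1)) + sigma * Mid c (n+2)).
Proof.
  intros c1 Hs Ht H. unfold rec_holds in H. rewrite (E1 c n c1), (E2 c n c1), (E3 c n c1) in H.
  replace (S (n+3)) with (n+4)%nat in H by lia.
  assert (0 < 1 + sigma*t) by nra.
  assert (Hw : / (1+sigma*t) * (1+sigma*t) = 1) by (field; lra).
  unfold Rdiv in *. set (w := / (1+sigma*t)) in *. set (x := c (n+4)%nat) in *.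
  assert (x * (w * (1+sigma*t)) = x) by (rewrite Hw; ring).
  lra.
Qed.

Lemma hb4 M X p q u v : 0 <= X -> 1 <= M -> (p <= q)%nat -> 0 < u -> 0 < v -> v <= 2*u ->
  X*M^p/u^2 <= 4*X*(M^q/v^2).
Proof. intros. assert (M^p <= M^q) by (apply Rle_pow; auto).
  assert (0 < M^p) by (apply pow_lt; lra).
  assert (v^2 <= 4*u^2) by (simpl; nra).
  assert (0 < v^2) by (apply pow_lt; lra).
  unfold Rdiv. 
  assert (/ u^2 <= 4 * / v^2).
  { replace (4 * / v^2) with (/ (v^2/4)) by (field; lra). apply Rinv_le_contravar. lra. lra. }
  assert (0 <= / u^2) by (apply Rlt_le, Rinv_0_lt_compat, pow_lt; lra).
  assert (X * M^p * / u^2 <= X * M^q * / u^2).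
  { apply Rmult_le_compat_r; auto. apply Rmult_le_compat_l; auto. }
  assert (X * M^q * / u^2 <= X * M^q * (4 * / v^2)).
  { apply Rmult_le_compat_l; auto. apply Rmult_le_pos; auto. lra. }
  lra. Qed.

Lemma hb1 M X p q u v : 0 <= X -> 1 <= M -> (p <= q)%nat -> 0 < u -> 0 < v -> v <= u ->
  X*M^p/u^2 <= X*(M^q/v^2).
Proof. intros. assert (M^p <= M^q) by (apply Rle_pow; auto).
  assert (0 < M^p) by (apply pow_lt; lra).
  assert (v^2 <= u^2) by (simpl; nra).
  assert (0 < v^2) by (apply pow_lt; lra).
  unfold Rdiv.
  assert (/ u^2 <= / v^2) by (apply Rinv_le_contravar; lra).
  assert (0 <= / u^2) by (apply Rlt_le, Rinv_0_lt_compat, pow_lt; lra).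
  assert (X * M^p * / u^2 <= X * M^q * / u^2).
  { apply Rmult_le_compat_r; auto. apply Rmult_le_compat_l; auto. }
  assert (X * M^q * / u^2 <= X * M^q * / v^2).
  { apply Rmult_le_compat_l; auto. apply Rmult_le_pos; auto. lra. }
  lra. Qed.

Theorem lemma3p2 (eta theta sigma tau t : R) (c : nat -> R) :
  0 <= sigma -> 0 <= tau -> sigma * tau <> 1 -> 0 < t ->
  c 1%nat = 1 ->
  (forall k : nat, (2 <= k)%nat -> rec_holds eta theta sigma tau t c k) ->
  forall p : R, 1 < p ->
  exists M : R, forall k : nat, (3 <= k)%nat ->
    Rabs (c k) <= M ^ (k - 2) / Rpower (INR k) p.
Proof.
  intros Hs Htau Hst Ht c1 Hrec p Hp.
  set (a := (theta - eta*t)/(1+sigma*t)).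
  set (b := (t+tau)/(1+sigma*t)).
  set (D := (1 - sigma*tau)/(1+sigma*t)).
  assert (HD : D <> 0).
  { unfold D. assert (0 < 1 + sigma*t) by nra. unfold Rdiv. apply Rmult_integral_contrapositive. split. lra.
    apply Rinv_neq_0_compat. lra. }
  set (K := 1 + 4*Rabs (c 2%nat) + 9*Rabs (c 3%nat)).
  assert (HK : 1 <= K) by (unfold K; pose proof (Rabs_pos (c 2%nat)); pose proof (Rabs_pos (c 3%nat)); lra).
  set (M := 1 + (4*Rabs a + Rabs b*(8 + 16*K + Rabs eta*(8+4*K) + 4*sigma*K))/Rabs D).
  assert (HM : 1 <= M).
  { unfold M. assert (0 < Rabs D) by (apply Rabs_pos_lt; auto).
    assert (0 <= 4*Rabs a + Rabs b*(8 + 16*K + Rabs eta*(8+4*K) + 4*sigma*K)).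
    { pose proof (Rabs_pos a). pose proof (Rabs_pos b). pose proof (Rabs_pos eta).
      assert (0 <= Rabs eta*(8+4*K)) by (apply Rmult_le_pos; lra).
      assert (0 <= sigma*K) by (apply Rmult_le_pos; lra).
      assert (0 <= Rabs b*(8 + 16*K + Rabs eta*(8+4*K) + 4*sigma*K)) by (apply Rmult_le_pos; lra). lra. }
    assert (0 <= (4*Rabs a + Rabs b*(8 + 16*K + Rabs eta*(8+4*K) + 4*sigma*K))/Rabs D) by (apply Rle_mult_inv_pos; auto).
    lra. }
  assert (Claim : forall n j, (2 <= j <= n+3)%nat -> Rabs (c j) <= K * M^(j-2) / INR j ^ 2).
  { induction n; intros j Hj.
    - assert (j = 2%nat \/ j = 3%nat) as [-> | ->] by lia.
      + simpl. pose proof (Rabs_pos (c 3%nat)). unfold K. lra.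
      + simpl. pose proof (Rabs_pos (c 2%nat)). assert (K <= K * M) by nra. unfold K in *. lra.
    - destruct (Nat.le_gt_cases j (n+3)) as [Hle|Hgt]. { apply IHn; lia. }
      assert (j = (n+4)%nat) as -> by lia.
      assert (Hdec := decomp eta theta sigma tau t c n c1 Hs Ht (Hrec (n+3)%nat ltac:(lia))).
      set (Y := M^(n+1) / INR (n+4) ^ 2).
      pose proof (pos_INR n).
      assert (I2 : INR (n+2) = INR n + 2) by (rewrite plus_INR; simpl; ring).
      assert (I3 : INR (n+3) = INR n + 3) by (rewrite plus_INR; simpl; ring).
      assert (I4 : INR (n+4) = INR n + 4) by (rewrite plus_INR; simpl; ring).
      assert (I5 : INR (n+1+3) = INR n + 4) by (rewrite !plus_INR; simpl; ring).
      assert (I6 : INR (n+2+3) = INR n + 5) by (rewrite !plus_INR; simpl; ring).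
      assert (h2 : Rabs (c (n+2)%nat) <= 4*K*Y).
      { eapply Rle_trans. apply IHn; lia. replace (n+2-2)%nat with n by lia. rewrite I2. unfold Y. rewrite I4.
        apply hb4; try lia; lra. }
      assert (h3 : Rabs (c (n+3)%nat) <= 4*K*Y).
      { eapply Rle_trans. apply IHn; lia. replace (n+3-2)%nat with (n+1)%nat by lia. rewrite I3. unfold Y. rewrite I4.
        apply hb4; try lia; lra. }
      assert (h0 : Rabs (Mid c n) <= 16*K^2*Y).
      { unfold Mid. eapply Rle_trans. apply (mid_bound c K M); try lra. intros; apply IHn; lia.
        rewrite I3. unfold Y. rewrite I4. replace (16*K^2) with (4*(4*K^2)) by ring.
        apply hb4; try lia; try lra. pose proof (pow2_ge_0 K); lra. }
      assert (h1 : Rabs (Mid c (n+1)) <= 4*K^2*Y).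
      { unfold Mid. eapply Rle_trans. apply (mid_bound c K M); try lra. intros; apply IHn; lia.
        rewrite I5. unfold Y. rewrite I4.
        apply hb1; try lia; try lra. pose proof (pow2_ge_0 K); lra. }
      assert (h4 : Rabs (Mid c (n+2)) <= 4*K^2*Y).
      { unfold Mid. eapply Rle_trans. apply (mid_bound c K M); try lra. intros; apply IHn; lia.
        rewrite I6. unfold Y. rewrite I4.
        apply hb1; try lia; try lra. pose proof (pow2_ge_0 K); lra. }
      assert (HY : 0 <= Y).
      { unfold Y. apply Rle_mult_inv_pos. apply pow_le; lra. apply pow_lt. rewrite I4; lra. }
      assert (Hz := step_arith a b eta sigma D K Y _ _ _ _ _ _ Hs ltac:(lra) HY HD h2 h3 h0 h1 h4 Hdec).
      replace (K * M ^ (n + 4 - 2) / INR (n + 4) ^ 2) with (K * Y * M).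
      2:{ unfold Y. replace (n+4-2)%nat with (S (n+1)) by lia. simpl pow. field. rewrite I4. lra. }
      exact Hz. }
  exists (K * M * exp (3*p)).
  intros k Hk.
  assert (Hck := Claim k k ltac:(lia)).
  assert (Hkr : 3 <= INR k) by (replace 3 with (INR 3) by (simpl; ring); apply le_INR; lia).
  assert (Ik2 : INR (k-2) = INR k - 2) by (rewrite minus_INR by lia; simpl; ring).
  assert (S1 : K * M^(k-2) / INR k ^ 2 <= K * M^(k-2)).
  { assert (0 <= K * M^(k-2)) by (apply Rmult_le_pos; [lra | apply pow_le; lra]).
    assert (1 <= INR k ^ 2) by (simpl; nra).
    unfold Rdiv. rewrite <- (Rmult_1_r (K * M^(k-2))) at 2. apply Rmult_le_compat_l; auto.
    rewrite <- Rinv_1. apply Rinv_le_contravar; lra. }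
  assert (S2 : K * M^(k-2) <= (K*M)^(k-2)).
  { rewrite Rpow_mult_distr. apply Rmult_le_compat_r. apply pow_le; lra.
    replace K with (K^1) at 1 by ring. apply Rle_pow; auto; lia. }
  set (e := exp (3*p)).
  assert (He : 0 < e) by apply exp_pos.
  assert (Hek : e^(k-2) = exp (INR (k-2) * (3*p))).
  { rewrite <- (exp_ln (e^(k-2))) by (apply pow_lt; auto). rewrite ln_pow by auto. unfold e. rewrite ln_exp. auto. }
  assert (Hlnk : ln (INR k) < INR k).
  { rewrite <- (ln_exp (INR k)) at 2. apply ln_increasing. lra. pose proof (exp_ineq1 (INR k) ltac:(lra)). lra. }
  assert (HR : Rpower (INR k) p <= e^(k-2)).
  { unfold Rpower. rewrite Hek. apply Rlt_le, exp_increasing. rewrite Ik2; nra. }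
  assert (HRp : 0 < Rpower (INR k) p) by (unfold Rpower; apply exp_pos).
  assert (S3 : (K*M)^(k-2) <= (K*M*e)^(k-2) / Rpower (INR k) p).
  { rewrite (Rpow_mult_distr (K*M) e). unfold Rdiv. rewrite Rmult_assoc.
    rewrite <- (Rmult_1_r ((K*M)^(k-2))) at 1. apply Rmult_le_compat_l. apply pow_le; nra.
    apply (Rmult_le_reg_l (Rpower (INR k) p)); auto. rewrite Rmult_1_r.
    replace (Rpower (INR k) p * (e ^ (k - 2) * / Rpower (INR k) p)) with (e^(k-2)) by (field; lra). auto. }
  lra.
Qed.
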